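(* Let $s$ and $d$ be positive integers with $s\leqslant d/2$. Then $$ \left(\frac12+\frac1{2^{s+1}}\right)2^d-o(2^d)\leqslant n(d-s,d)\leqslant \left(\frac12+\frac1{2^{s+1}}\right)2^d, $$ where $o(2^d)$ refers to $d\to\infty$ with $s$ fixed. Consequently, for every fixed positive integer $s$, $$ \lim_{d\to\infty}\frac{n(d-s,d)}{2^d}=\frac{2^s+1}{2^{s+1}}. $$
   Context: A box in $\mathbb{R}^d$ is an axis-parallel $d$-dimensional cuboid. For a positive integer $k\leqslant d$, two boxes in $\mathbb{R}^d$ are called $k$-neighborly if their intersection is a box of dimension at least $d-k$ and at most $d-1$. $n(k,d)$ denotes the maximum size of a family of pairwise $k$-neighborly boxes in $\mathbb{R}^d$. *)

(* Defs.v *)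
From HB Require Import structures.
From mathcomp Require Import all_boot all_order all_algebra.
From mathcomp Require Import all_classical all_reals all_analysis.
Set Implicit Arguments. Unset Strict Implicit. Unset Printing Implicit Defensive.
Import Order.TTheory GRing.Theory Num.Theory.
Local Open Scope ring_scope.

Record box (R : realType) (d : nat) := Box {
  lo : 'I_d -> R;
  hi : 'I_d -> R;
  lo_lt_hi : forall i, lo i < hi i }.

(* The intersection of two boxes is nonempty iff every coordinate
   interval intersection is nonempty; it is then the box whose i-th
   side is [max lo, min hi]. *)
Definition boxes_meet (R : realType) (d : nat) (B C : box R d) : Prop :=
  forall i, Num.max (lo B i) (lo C i) <= Num.min (hi B i) (hi C i).

Definition inter_dim (R : realType) (d : nat) (B C : box R d) : nat :=
  #|[set i : 'I_d | Num.max (lo B i) (lo C i) < Num.min (hi B i) (hi C i)]|.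

Definition neighborly (R : realType) (k d : nat) (B C : box R d) : Prop :=
  boxes_meet B C /\ (d - k <= inter_dim B C)%N /\ (inter_dim B C <= d - 1)%N.

Definition has_family (R : realType) (k d m : nat) : Prop :=
  exists F : 'I_m -> box R d,
    forall i j : 'I_m, i != j -> @neighborly R k d (F i) (F j).

Definition n_kd (R : realType) (k d : nat) : R :=
  sup [set (m%:R : R) | m in [set m | has_family R k d m]].

(* Main.v *)
Require Import Defs.
From HB Require Import structures.
From mathcomp Require Import all_boot all_order all_algebra.
From mathcomp Require Import all_classical all_reals all_analysis.
From mathcomp Require Import zify ring lra.
Import Order.TTheory GRing.Theory Num.Theory.
Import numFieldNormedType.Exports.
Set Implicit Arguments. Unset Strict Implicit. Unset Printing Implicit Defensive.
Local Open Scope ring_scope.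

Definition E0 (R : realType) d m (F : 'I_m -> box R d) j i : bool :=
  [exists k, hi (F j) i == lo (F k) i].
Definition E1 (R : realType) d m (F : 'I_m -> box R d) j i : bool :=
  [exists k, lo (F j) i == hi (F k) i].
Definition wt (R : realType) d m (F : 'I_m -> box R d) j i (b : bool) : nat :=
  if E0 F j i then (if b then 0 else 2)%N else if E1 F j i then (if b then 2 else 0)%N else 1%N.
Definition mass (R : realType) d m (F : 'I_m -> box R d) j (v : {ffun 'I_d -> bool}) : nat :=
  (\prod_i wt F j i (v i))%N.
Definition compat (R : realType) d m (F : 'I_m -> box R d) j (v : {ffun 'I_d -> bool}) : bool :=
  [forall i, wt F j i (v i) != 0%N].
Definition nonstar (R : realType) d m (F : 'I_m -> box R d) j : {set 'I_d} :=
  [set i | E0 F j i || E1 F j i].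
Definition strict (R : realType) d (B C : box R d) i : bool :=
  Num.max (lo B i) (lo C i) < Num.min (hi B i) (hi C i).

Lemma strictE (R : realType) d (B C : box R d) i :
  strict B C i = (lo B i < hi C i) && (lo C i < hi B i).
Proof.
rewrite /strict gt_max !lt_min (lo_lt_hi B i) (lo_lt_hi C i) /=.
by rewrite andbT andbC.
Qed.

Lemma meet_all (R : realType) d m (F : 'I_m -> box R d) :
  (forall j k, j != k -> boxes_meet (F j) (F k)) ->
  forall j k i, lo (F j) i <= hi (F k) i.
Proof.
move=> Hm j k i; have [<-|jk] := eqVneq j k; first exact/ltW/lo_lt_hi.
have := Hm j k jk i; rewrite ge_max !le_min => /andP[/andP[_ ->] _] //.
Qed.

Lemma ex01 (R : realType) d m (F : 'I_m -> box R d) :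
  (forall j k, j != k -> boxes_meet (F j) (F k)) ->
  forall j i, ~~ (E0 F j i && E1 F j i).
Proof.
move=> Hm j i; apply/negP => /andP[/existsP[k /eqP hk] /existsP[l /eqP hl]].
have := meet_all Hm k l i; rewrite -hk -hl => h.
by have := lo_lt_hi (F j) i; rewrite ltNge h.
Qed.

Lemma opp_notstrict (R : realType) d m (F : 'I_m -> box R d) :
  (forall j k, j != k -> boxes_meet (F j) (F k)) ->
  forall j k i, E1 F j i -> E0 F k i -> ~~ strict (F j) (F k) i.
Proof.
move=> Hm j k i /existsP[a /eqP ha] /existsP[b /eqP hb].
rewrite strictE negb_and -!leNgt; apply/orP; left.
by rewrite hb ha meet_all.
Qed.

Lemma notstrict_opp (R : realType) d m (F : 'I_m -> box R d) :
  (forall j k, j != k -> boxes_meet (F j) (F k)) ->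
  forall j k i, ~~ strict (F j) (F k) i ->
   (E0 F j i && E1 F k i) || (E1 F j i && E0 F k i).
Proof.
move=> Hm j k i; rewrite strictE negb_and -!leNgt => /orP[h|h].
  have e : hi (F k) i = lo (F j) i by apply/le_anti; rewrite h meet_all.
  apply/orP; right; apply/andP; split; apply/existsP.
    by exists k; rewrite e.
  by exists j; rewrite e.
have e : hi (F j) i = lo (F k) i by apply/le_anti; rewrite h meet_all.
apply/orP; left; apply/andP; split; apply/existsP.
  by exists k; rewrite e.
by exists j; rewrite e.
Qed.
Local Open Scope nat_scope.

Definition compv d (v : {ffun 'I_d -> bool}) : {ffun 'I_d -> bool} := [ffun i => ~~ v i].
Lemma compvK d : involutive (@compv d).
Proof. by move=> v; apply/ffunP => i; rewrite !ffunE negbK. Qed.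

Lemma sum_mass (R : realType) d m (F : 'I_m -> box R d) j :
  \sum_v mass F j v = 2 ^ d.
Proof.
rewrite /mass -(bigA_distr_bigA (fun i b => wt F j i b)) /=.
rewrite (eq_bigr (fun _ => 2)); last first.
  by move=> i _; rewrite big_bool /wt; case: (E0 F j i); case: (E1 F j i).
by rewrite prod_nat_const card_ord.
Qed.

Lemma mass_le (R : realType) d m (F : 'I_m -> box R d) j v :
  mass F j v <= 2 ^ #|nonstar F j|.
Proof.
rewrite /mass (@leq_trans (\prod_i (if i \in nonstar F j then 2 else 1))) //.
  apply: leq_prod => i _; rewrite /wt inE.
  by case: (E0 F j i); case: (E1 F j i); case: (v i).
by rewrite -big_mkcond prod_nat_const.
Qed.

Lemma mass_le_d (R : realType) d m (F : 'I_m -> box R d) j v :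
  mass F j v <= 2 ^ d.
Proof.
apply: (leq_trans (mass_le F j v)); rewrite leq_pexp2l //.
by apply: leq_trans (max_card _) _; rewrite card_ord.
Qed.

Lemma mass0 (R : realType) d m (F : 'I_m -> box R d) j v :
  ~~ compat F j v -> mass F j v = 0.
Proof.
move=> /forallPn[i]; rewrite negbK => /eqP h.
by rewrite /mass (bigD1 i) //= h.
Qed.

Lemma compat_wt (R : realType) d m (F : 'I_m -> box R d) j v i :
  (forall j k, j != k -> boxes_meet (F j) (F k)) ->
  compat F j v -> (E0 F j i -> v i = false) /\ (E1 F j i -> v i = true).
Proof.
move=> Hm /forallP /(_ i); rewrite /wt; have := ex01 Hm j i.
by case: (E0 F j i); case: (E1 F j i); case: (v i).
Qed.

Lemma inter_dimE (R : realType) d (B C : box R d) :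
  inter_dim B C = #|[set i | strict B C i]|.
Proof. by []. Qed.

Lemma strictC (R : realType) d (B C : box R d) i : strict B C i = strict C B i.
Proof. by rewrite !strictE andbC. Qed.

Lemma disjoint_compat (R : realType) d m s (F : 'I_m -> box R d) :
  0 < d -> (forall j k, j != k -> neighborly (d - s) (F j) (F k)) ->
  forall j k v, j != k -> compat F j v -> compat F k v -> False.
Proof.
move=> d0 Hn.
have Hm : forall j k, j != k -> boxes_meet (F j) (F k) by move=> j k /Hn[].
move=> j k v jk cj ck; have [_ [_ h]] := Hn j k jk.
have [i ni] : exists i, ~~ strict (F j) (F k) i.
  apply/existsP; move: h; apply: contraLR => /existsPn al.
  rewrite -ltnNge inter_dimE.
  have -> : [set i | strict (F j) (F k) i] = [set: 'I_d]%SET.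
    by apply/setP => i; rewrite !inE; move: (al i); rewrite negbK.
  by rewrite cardsT card_ord; lia.
have := notstrict_opp Hm ni => /orP[/andP[a b]|/andP[a b]].
  have [/(_ a) h1 _] := compat_wt i Hm cj; have [_ /(_ b) h2] := compat_wt i Hm ck.
  by rewrite h1 in h2.
have [_ /(_ a) h1] := compat_wt i Hm cj; have [/(_ b) h2 _] := compat_wt i Hm ck.
by rewrite h1 in h2.
Qed.

Lemma many_stars (R : realType) d m s (F : 'I_m -> box R d) :
  s <= d -> (forall j k, j != k -> neighborly (d - s) (F j) (F k)) ->
  forall j k v, j != k -> compat F j v -> compat F k (compv v) ->
  nonstar F j = [set: 'I_d]%SET -> s <= #|~: nonstar F k|.
Proof.
move=> sd Hn.
have Hm : forall j k, j != k -> boxes_meet (F j) (F k) by move=> j k /Hn[].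
move=> j k v jk cj ck full; have [_ [h _]] := Hn j k jk.
have -> : s = d - (d - s) by lia.
apply: (leq_trans h); rewrite inter_dimE; apply: subset_leq_card.
apply/fintype.subsetP => i; rewrite !inE => si; apply/negP => nk.
have : i \in nonstar F j by rewrite full inE.
rewrite inE => /orP[e0j|e1j].
  have [/(_ e0j) vi _] := compat_wt i Hm cj.
  move: nk => /orP[e0k|e1k].
    by have [/(_ e0k) ] := compat_wt i Hm ck; rewrite ffunE vi.
  by move: si; rewrite strictC (negbTE (opp_notstrict Hm e1k e0j)).
have [_ /(_ e1j) vi] := compat_wt i Hm cj.
move: nk => /orP[e0k|e1k].
  by move: si; rewrite (negbTE (opp_notstrict Hm e1j e0k)).
by have [_ /(_ e1k) ] := compat_wt i Hm ck; rewrite ffunE vi.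
Qed.
Definition Mv (R : realType) d m (F : 'I_m -> box R d) v := \sum_j mass F j v.

Lemma Mv_cases (R : realType) d m s (F : 'I_m -> box R d) :
  0 < d -> (forall j k, j != k -> neighborly (d - s) (F j) (F k)) ->
  forall v, Mv F v = 0 \/ exists j, compat F j v /\ Mv F v = mass F j v.
Proof.
move=> d0 Hn v; case: (pickP (fun j => compat F j v)) => [j cj | none].
  right; exists j; split=> //; rewrite /Mv (bigD1 j) //= big1 ?addn0 //.
  move=> k kj; apply: mass0; apply/negP => ck.
  exact: (disjoint_compat d0 Hn kj ck cj).
by left; apply: big1 => j _; apply: mass0; rewrite none.
Qed.

Lemma card_lt_full d (A : {set 'I_d}) : A != [set: 'I_d]%SET -> #|A| <= d.-1.
Proof.
move=> h; have := proper_card (A := A) (B := [set: 'I_d]%SET).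
rewrite properT h cardsT card_ord => /(_ isT); lia.
Qed.

Lemma pair_bound (R : realType) d m s (F : 'I_m -> box R d) :
  0 < d -> s <= d -> (forall j k, j != k -> neighborly (d - s) (F j) (F k)) ->
  forall v, Mv F v + Mv F (compv v) <= 2 ^ d + 2 ^ (d - s).
Proof.
move=> d0 sd Hn v.
have Hm : forall j k, j != k -> boxes_meet (F j) (F k) by move=> j k /Hn[].
have p1 : 0 < 2 ^ d by rewrite expn_gt0.
have p2 : 0 < 2 ^ (d - s) by rewrite expn_gt0.
have Mle : forall w, Mv F w <= 2 ^ d.
  move=> w; case: (Mv_cases d0 Hn w) => [->|[j [_ ->]]] //; exact: mass_le_d.
case: (Mv_cases d0 Hn v) => [->|[j [cj ->]]].
  by rewrite add0n (leq_trans (Mle _)) ?leq_addr.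
case: (Mv_cases d0 Hn (compv v)) => [->|[k [ck ->]]].
  by rewrite addn0 (leq_trans (mass_le_d _ _ _)) ?leq_addr.
have [ejk|jk] := eqVneq j k; first subst k.
  have e : nonstar F j = finset.set0.
    apply/setP => i; rewrite !inE; apply/negP => /orP[h|h].
      have [/(_ h) h1 _] := compat_wt i Hm cj; have [/(_ h) h2 _] := compat_wt i Hm ck.
      by rewrite ffunE h1 in h2.
    have [_ /(_ h) h1] := compat_wt i Hm cj; have [_ /(_ h) h2] := compat_wt i Hm ck.
    by rewrite ffunE h1 in h2.
  have := mass_le F j v; have := mass_le F j (compv v); rewrite e cards0 expn0.
  lia.
have nsC : forall l, #|nonstar F l| + #|~: nonstar F l| = d.
  by move=> l; rewrite cardsC card_ord.
case: (eqVneq (nonstar F j) [set: 'I_d]%SET) => fj.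
  have := many_stars sd Hn jk cj ck fj; have := nsC k.
  have := mass_le F k (compv v); have := mass_le_d F j v.
  move=> h1 h2 h3 h4; apply: leq_add => //; apply: (leq_trans h2).
  by rewrite leq_pexp2l //; lia.
case: (eqVneq (nonstar F k) [set: 'I_d]%SET) => fk.
  have kj : k != j by rewrite eq_sym.
  have cj' : compat F j (compv (compv v)) by rewrite compvK.
  have := many_stars sd Hn kj ck cj' fk; have := nsC j.
  have := mass_le F j v; have := mass_le_d F k (compv v).
  move=> h1 h2 h3 h4; rewrite addnC; apply: leq_add => //; apply: (leq_trans h2).
  by rewrite leq_pexp2l //; lia.
have := mass_le F j v; have := mass_le F k (compv v).
have := card_lt_full fj; have := card_lt_full fk.
move=> c1 c2 h1 h2.
have e1 : 2 ^ #|nonstar F j| <= 2 ^ d.-1 by rewrite leq_pexp2l.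
have e2 : 2 ^ #|nonstar F k| <= 2 ^ d.-1 by rewrite leq_pexp2l.
have e3 : 2 ^ d = 2 ^ d.-1 + 2 ^ d.-1.
  by rewrite -{1}(prednK d0) expnS mul2n addnn.
lia.
Qed.

Lemma upper_nat (R : realType) d m s (F : 'I_m -> box R d) :
  0 < d -> s <= d -> (forall j k, j != k -> neighborly (d - s) (F j) (F k)) ->
  2 * m <= 2 ^ d + 2 ^ (d - s).
Proof.
move=> d0 sd Hn.
have e1 : \sum_v Mv F v = m * 2 ^ d.
  rewrite /Mv exchange_big /= (eq_bigr (fun _ => 2 ^ d)); last by move=> j _; exact: sum_mass.
  by rewrite sum_nat_const card_ord mulnC.
have e2 : \sum_v Mv F (compv v) = \sum_v Mv F v.
  by rewrite [RHS](reindex_inj (can_inj (@compvK d))).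
have : \sum_v (Mv F v + Mv F (compv v)) <= \sum_(v : {ffun 'I_d -> bool}) (2 ^ d + 2 ^ (d - s)).
  by apply: leq_sum => v _; exact: pair_bound.
rewrite big_split /= e2 e1 sum_nat_const card_ffun card_bool card_ord.
move=> h; rewrite -(@leq_pmul2l (2 ^ d)) ?expn_gt0 //; apply: leq_trans h.
by rewrite mulnCA mul2n -addnn mulnC.
Qed.
Local Open Scope ring_scope.
Lemma upper_real (R : realType) (s d m : nat) : (0 < s)%N -> (0 < d)%N -> (2 * s <= d)%N ->
  has_family R (d - s) d m -> (m%:R : R) <= (1 / 2 + 1 / 2 ^+ s.+1) * 2 ^+ d.
Proof.
move=> s0 d0 sd [F Hn].
have sd' : (s <= d)%N by lia.
have h := upper_nat d0 sd' Hn.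
have {}h : ((2 * m)%N%:R : R) <= (2 ^ d + 2 ^ (d - s))%N%:R by rewrite ler_nat.
move: h d0 sd; have [n ->] : exists n, d = (s + n)%N by exists (d - s)%N; lia.
rewrite addKn natrM natrD !natrX => h _ _.
have hs : (2 : R) ^+ s != 0 by rewrite expf_neq0.
have -> : (1 / 2 + 1 / 2 ^+ s.+1) * 2 ^+ (s + n) = ((2 ^+ (s + n) + 2 ^+ n) : R) / 2.
  rewrite exprD exprS; field; exact: hs.
by rewrite ler_pdivlMr // mulrC.
Qed.
Local Open Scope ring_scope.

Definition wlo (R : realType) (o : option bool) : R := if o == Some true then 1 else 0.
Definition whi (R : realType) (o : option bool) : R := if o == Some false then 1 else 2.
Lemma wlo_lt_whi (R : realType) o : wlo R o < whi R o.
Proof. by case: o => [[]|]; rewrite /wlo /whi /=; lra. Qed.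

Definition box_of (R : realType) d (w : 'I_d -> option bool) : box R d :=
  @Box R d (fun i => wlo R (w i)) (fun i => whi R (w i)) (fun i => wlo_lt_whi R (w i)).

Definition oppw (a b : option bool) : bool :=
  ((a == Some true) && (b == Some false)) || ((a == Some false) && (b == Some true)).

Lemma oppwC a b : oppw a b = oppw b a.
Proof. by case: a => [[]|]; case: b => [[]|]. Qed.

Lemma oppwS (x y : bool) : oppw (Some x) (Some y) = (x != y).
Proof. by case: x; case: y. Qed.

Lemma oppwN a : oppw None a = false.
Proof. by case: a => [[]|]. Qed.

Lemma strict_box (R : realType) d (u w : 'I_d -> option bool) i :
  strict (box_of R u) (box_of R w) i = ~~ oppw (u i) (w i).
Proof.
rewrite strictE /=; case: (u i) => [[]|]; case: (w i) => [[]|];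
  rewrite /wlo /whi /oppw /=.
all: apply/idP/idP => //; rewrite ?andbT ?andTb.
all: try (move=> /andP[h1 h2]); try lra.
all: try (move=> _; apply/andP; split; lra).
Qed.

Lemma card_lt_full' d (A : {set 'I_d}) : A != [set: 'I_d]%SET -> (#|A| <= d.-1)%N.
Proof. exact: card_lt_full. Qed.

Lemma neighborly_words (R : realType) s d (u w : 'I_d -> option bool) :
  (s <= d)%N -> (exists i, oppw (u i) (w i)) ->
  (s <= #|[set i | ~~ oppw (u i) (w i)]|)%N ->
  neighborly (d - s) (box_of R u) (box_of R w).
Proof.
move=> sd [i oi] hs; split; [|split].
- move=> j; rewrite ge_max !le_min /= /wlo /whi.
  by case: (u j) => [[]|]; case: (w j) => [[]|] /=; apply/and3P; split; (try apply/andP; try split); lra.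
- rewrite inter_dimE.
  have -> : [set j | strict (box_of R u) (box_of R w) j] = [set j | ~~ oppw (u j) (w j)].
    by apply/setP => j; rewrite !inE strict_box.
  by rewrite subKn.
- rewrite inter_dimE subn1; apply: card_lt_full; apply/negP => /eqP e.
  by move/setP: e => /(_ i); rewrite !inE strict_box oi.
Qed.
Local Open Scope nat_scope.

Definition wG s n (p : option {set 'I_s} * {set 'I_n}) (i : 'I_(s + n)) : option bool :=
  match fintype.split i with inl a => omap (fun X : {set 'I_s} => a \in X) p.1 | inr b => Some (b \in p.2) end.
Definition validp s n r (p : option {set 'I_s} * {set 'I_n}) : bool :=
  if p.1 is Some _ then #|p.2| <= r else r < #|p.2|.

Lemma wG_l s n p (a : 'I_s) : wG p (lshift n a) = omap (fun X : {set 'I_s} => a \in X) p.1.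
Proof. by rewrite /wG (unsplitK (inl _ a) : fintype.split (lshift n a) = inl a). Qed.
Lemma wG_r s n p (b : 'I_n) : wG p (rshift s b) = Some (b \in p.2).
Proof. by rewrite /wG (unsplitK (inr _ b) : fintype.split (rshift s b) = inr b). Qed.

Lemma set_neq_ex (T : finType) (A B : {set T}) : A != B -> exists x, (x \in A) != (x \in B).
Proof.
move=> h; apply/existsP; apply: contraNT h => /existsPn al; apply/eqP/setP => x.
by move: (al x); rewrite negbK => /eqP.
Qed.

Lemma set_lt_ex (T : finType) (A B : {set T}) : #|A| < #|B| -> exists x, (x \in B) && (x \notin A).
Proof.
move=> h; apply/existsP; move: h; apply: contraTT => /existsPn al; rewrite -leqNgt.
apply: subset_leq_card; apply/fintype.subsetP => x xB.
by move: (al x); rewrite xB /= negbK.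
Qed.

Lemma nonopp_none s n (p q : option {set 'I_s} * {set 'I_n}) :
  (p.1 == None) || (q.1 == None) ->
  s <= #|[set i | ~~ oppw (wG p i) (wG q i)]|.
Proof.
move=> h.
have sub : @lshift s n @: [set: 'I_s]%SET \subset [set i | ~~ oppw (wG p i) (wG q i)].
  apply/fintype.subsetP => i /imsetP[a _ ->]; rewrite inE !wG_l.
  by case/orP: h => /eqP -> /=; rewrite ?oppwN // oppwC oppwN.
apply: leq_trans (subset_leq_card sub); rewrite card_imset ?cardsT ?card_ord //.
exact: lshift_inj.
Qed.

Lemma nonopp_big s n r (p q : option {set 'I_s} * {set 'I_n}) :
  2 * r + s <= n -> validp r p -> validp r q ->
  s <= #|[set i | ~~ oppw (wG p i) (wG q i)]|.
Proof.
move=> hr; case: p => [[X|] Y]; case: q => [[X'|] Y']; rewrite /validp /= => vp vq.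
- have sub : @rshift s n @: (~: (Y :|: Y')) \subset [set i | ~~ oppw (wG (Some X, Y) i) (wG (Some X', Y') i)].
    apply/fintype.subsetP => i /imsetP[b]; rewrite !inE negb_or => /andP[bY bY'] ->.
    by rewrite !wG_r /= (negbTE bY) (negbTE bY').
  apply: leq_trans (subset_leq_card sub); rewrite card_imset; last exact: rshift_inj.
  have := cardsC (Y :|: Y'); rewrite card_ord.
  have h : #|Y :|: Y'| <= #|Y| + #|Y'| by rewrite cardsU leq_subr.
  move=> hh; clear sub; move: h hh vp vq hr; set a := #|Y :|: Y'|; set b := #|~: _|; set c := #|Y|; set e := #|Y'|; lia.
all: apply: nonopp_none; by rewrite eqxx ?orbT.
Qed.

Lemma opp_exists s n r (p q : option {set 'I_s} * {set 'I_n}) :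
  p != q -> validp r p -> validp r q -> exists i, oppw (wG p i) (wG q i).
Proof.
case: p => [[X|] Y]; case: q => [[X'|] Y']; rewrite /validp /= => pq vp vq.
- have [eX|nX] := eqVneq X X'.
    subst X'; have nY : Y != Y' by apply: contraNneq pq => ->.
    have [b hb] := set_neq_ex nY; exists (rshift s b); by rewrite !wG_r oppwS.
  have [a ha] := set_neq_ex nX; exists (lshift n a); by rewrite !wG_l oppwS.
- have [b /andP[h1 h2]] := set_lt_ex (leq_ltn_trans vp vq).
  by exists (rshift s b); rewrite !wG_r oppwS (negbTE h2) h1.
- have [b /andP[h1 h2]] := set_lt_ex (leq_ltn_trans vq vp).
  by exists (rshift s b); rewrite !wG_r oppwS (negbTE h2) h1.
- have nY : Y != Y' by apply: contraNneq pq => ->.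
  have [b hb] := set_neq_ex nY; exists (rshift s b); by rewrite !wG_r oppwS.
Qed.
Definition Low s n : {set {set 'I_n}} := [set Y : {set 'I_n} | #|Y| <= (n - s)./2].
Definition PA s n := finset.setX [set: {set 'I_s}]%SET (Low s n).
Definition PB s n := ~: Low s n.
Definition Gsum s n (x : 'I_#|PA s n| + 'I_#|PB s n|) : option {set 'I_s} * {set 'I_n} :=
  match x with inl a => (Some (enum_val a).1, (enum_val a).2) | inr b => (None, enum_val b) end.

Lemma Gsum_inj s n : injective (@Gsum s n).
Proof.
move=> [a|a] [b|b] //= [].
- move=> e1 e2; congr inl; apply: enum_val_inj.
  by rewrite [enum_val a]surjective_pairing [enum_val b]surjective_pairing e1 e2.
- by move=> e; congr inr; apply: enum_val_inj.
Qed.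

Lemma Gsum_valid s n x : validp ((n - s)./2) (@Gsum s n x).
Proof.
case: x => [a|b]; rewrite /validp /=.
  by case: (enum_val a) (enum_valP a) => X Y; rewrite /PA finset.in_setX !inE.
by have := enum_valP b; rewrite /PB !inE ltnNge.
Qed.

Lemma card_setT_set (T : finType) : #|{set T}| = 2 ^ #|T|.
Proof. by rewrite -[LHS](cardsT {set T}) -powersetT card_powerset cardsT. Qed.

Lemma card_PA s n : #|PA s n| = 2 ^ s * #|Low s n|.
Proof. by rewrite /PA cardsX cardsT card_setT_set card_ord. Qed.

Lemma card_PB s n : #|PB s n| = 2 ^ n - #|Low s n|.
Proof. by rewrite /PB cardsCs finset.setCK card_setT_set card_ord. Qed.

Lemma has_family_low (R : realType) s n : 0 < s -> s <= n ->
  has_family R (s + n - s) (s + n) (#|PA s n| + #|PB s n|).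
Proof.
move=> s0 sn.
exists (fun i => box_of R (wG (Gsum (fintype.split i)))) => i j ij.
have hne : Gsum (fintype.split i) != Gsum (fintype.split j).
  apply: contraNneq ij => /Gsum_inj e; apply/eqP.
  by rewrite -(splitK i) -(splitK j) e.
apply: neighborly_words; first exact: leq_addr.
  exact: opp_exists hne (Gsum_valid _) (Gsum_valid _).
apply: nonopp_big (Gsum_valid _) (Gsum_valid _).
have := odd_double_half (n - s); rewrite -addnn; lia.
Qed.
Lemma bin_step n k : k.+1 * 'C(n, k.+1) = (n - k) * 'C(n, k).
Proof.
case: n => [|n]; first by rewrite bin0n muln0 sub0n.
by rewrite -mul_bin_diag -mul_bin_down.
Qed.

Lemma bin_mono n k : 2 * k.+1 <= n -> 'C(n, k) <= 'C(n, k.+1).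
Proof.
move=> h; rewrite -(@leq_pmul2l k.+1) // bin_step.
by apply: leq_mul => //; lia.
Qed.

Lemma bin_le_up n k h : k <= h -> 2 * h <= n -> 'C(n, k) <= 'C(n, h).
Proof.
elim: h => [|h IH] kh hn; first by move: kh; rewrite leqn0 => /eqP ->.
case: (ltngtP k h.+1) kh => // [kh _|-> _ //].
apply: leq_trans (IH kh _) (bin_mono _); lia.
Qed.

Lemma bin_le_mid n k : 'C(n, k) <= 'C(n, n./2).
Proof.
have h2 := odd_double_half n; rewrite -addnn in h2.
case: (leqP k n./2) => hk; first by apply: bin_le_up => //; lia.
case: (leqP k n) => kn; last by rewrite bin_small.
rewrite -bin_sub //; apply: bin_le_up => //; lia.
Qed.

Lemma cent_step m : m.+1 * 'C(m.+1.*2, m.+1) = 2 * m.*2.+1 * 'C(m.*2, m).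
Proof.
have e1 := mul_bin_diag (m.+1.*2) m.
have e2 := mul_bin_down (m.*2.+1) m.
rewrite doubleS /= in e1 e2 *.
rewrite -e1 -mulnA e2.
have -> : m.*2.+1 - m = m.+1 by rewrite -addnn; lia.
set B := 'C(_, _); rewrite -addnn; nia.
Qed.
Lemma cent m : 'C(m.*2, m) ^ 2 * (m.*2).+1 <= 16 ^ m.
Proof.
elim: m => [|m IH]; first by rewrite bin0.
have st := cent_step m.
move: IH st; set A := 'C(m.*2, m); set B := 'C(m.+1.*2, m.+1) => IH st.
rewrite -(@leq_pmul2l (m.+1 ^ 2)) ?expn_gt0 //.
have h1 : m.+1 ^ 2 * (B ^ 2 * (m.+1.*2).+1) = 4 * ((m.*2.+1) * (m.*2.+3)) * (A ^ 2 * (m.*2).+1).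
  have -> : m.+1 ^ 2 * (B ^ 2 * (m.+1.*2).+1) = (m.+1 * B) ^ 2 * (m.+1.*2).+1.
    by rewrite expnMn mulnA.
  rewrite st doubleS -!addnn; nia.
have h2 : (m.*2.+1) * (m.*2.+3) <= 4 * m.+1 ^ 2 by rewrite -addnn; nia.
rewrite h1; apply: leq_trans (leq_mul (leq_mul (leqnn 4) h2) IH) _.
rewrite [16 ^ m.+1]expnS; set X := 16 ^ m; set a := m.+1 ^ 2.
have -> : 4 * (4 * a) * X = a * (16 * X) by ring.
exact: leqnn.
Qed.

Lemma bin_sq n k : 'C(n, k) ^ 2 * n.+1 <= 4 * 4 ^ n.
Proof.
have h2 := odd_double_half n.
case: (boolP (odd n)) h2 => on h2.
- set m := n./2 in h2.
  have hn1 : n.+1 = m.+1.*2 by rewrite doubleS -h2 /= add1n.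
  have c1 : 'C(n, k) <= 'C(n.+1, k.+1) by rewrite binS leq_addl.
  have c2 : 'C(n.+1, k.+1) <= 'C(n.+1, m.+1).
    by rewrite hn1 -[X in _ <= 'C(_, X)](doubleK m.+1); exact: bin_le_mid.
  have := cent m.+1; rewrite -expnS.
  have -> : 16 ^ m.+1 = 4 ^ n.+1 by rewrite hn1 -mul2n expnM.
  move=> c3; apply: leq_trans c3; rewrite -hn1.
  apply: leq_mul; last exact: leqnSn.
  by rewrite leq_exp2r //; apply: leq_trans c1 c2.
- set m := n./2 in h2; rewrite /= add0n in h2.
  have c2 : 'C(n, k) <= 'C(m.*2, m).
    by rewrite -[X in _ <= 'C(_, X)](doubleK m) h2; exact: bin_le_mid.
  have := cent m.
  have -> : 16 ^ m = 4 ^ n by rewrite -h2 -mul2n expnM.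
  move=> c3; apply: leq_trans (leq_trans _ c3) _; last by apply: leq_pmull.
  by apply: leq_mul; [rewrite leq_exp2r | rewrite h2].
Qed.
Lemma level_card n k : #|[set Y : {set 'I_n} | #|Y| == k]| = 'C(n, k).
Proof. by rewrite card_draws card_ord. Qed.

Lemma window n a w :
  #|[set Y : {set 'I_n} | (a <= #|Y|) && (#|Y| < a + w)]| <= w * 'C(n, n./2).
Proof.
elim: w => [|w IH].
  have -> : [set Y : {set 'I_n} | (a <= #|Y|) && (#|Y| < a + 0)] = finset.set0.
    by apply/setP => Y; rewrite !inE; apply/negP => /andP[]; lia.
  by rewrite cards0.
have sub : [set Y : {set 'I_n} | (a <= #|Y|) && (#|Y| < a + w.+1)] \subset
    [set Y : {set 'I_n} | (a <= #|Y|) && (#|Y| < a + w)] :|: [set Y : {set 'I_n} | #|Y| == a + w].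
  apply/fintype.subsetP => Y; rewrite !inE => /andP[h1 h2].
  case: (ltngtP #|Y| (a + w)) => h3; rewrite ?h1 ?h3 ?eqxx ?orbT //; lia.
apply: leq_trans (subset_leq_card sub) _.
rewrite cardsU; apply: leq_trans (leq_subr _ _) _.
by rewrite mulSn addnC leq_add // level_card bin_le_mid.
Qed.

Lemma Lc_bounds s n : 0 < s -> s <= n ->
  2 * #|Low s n| <= 2 ^ n /\ 2 ^ n <= 2 * #|Low s n| + s * 'C(n, n./2).
Proof.
move=> s0 sn; set r := (n - s)./2.
have hr : odd (n - s) + (r + r) = n - s by rewrite addnn /r odd_double_half.
set L := Low s n; set H := [set Y : {set 'I_n} | n - r <= #|Y|].
have cH : #|H| = #|L|.
  have -> : H = [set ~: Y | Y in L].
    apply/setP => Z; rewrite inE; apply/idP/imsetP.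
      move=> hZ; exists (~: Z); last by rewrite finset.setCK.
      rewrite inE; have := cardsC Z; rewrite card_ord; lia.
    move=> [Y]; rewrite inE => hY ->; have := cardsC Y; rewrite card_ord; lia.
  by rewrite card_imset //; exact: finset.setC_inj.
have cC := cardsC L; rewrite card_setT_set card_ord in cC.
have s1 : H \subset ~: L.
  apply/fintype.subsetP => Y; rewrite !inE; lia.
have s2 : ~: L \subset H :|: [set Y : {set 'I_n} | (r.+1 <= #|Y|) && (#|Y| < r.+1 + (n - r - r.+1))].
  apply/fintype.subsetP => Y; rewrite !inE -ltnNge => h.
  case: (leqP (n - r) #|Y|) => //= h'; move: h h'; set c := #|Y| => h h'; apply/andP; split; lia.
split.
  have := subset_leq_card s1; move: cH cC; set a := #|H|; set b := #|L|; set c := #|~: L|; lia.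
have := subset_leq_card s2; rewrite cardsU => h.
have w := window n r.+1 (n - r - r.+1).
have ws : (n - r - r.+1) * 'C(n, n./2) <= s * 'C(n, n./2) by apply: leq_mul => //; lia.
move: h w ws cH cC; set a := #|H|; set b := #|L|; set c := #|~: L|.
set B := #|H :&: _|; set W := #|[set Y : {set 'I_n} | _]|.
set X := (n - r - r.+1) * _; set Z := s * _; lia.
Qed.
Local Open Scope ring_scope.

Definition fdef (R : realType) (s d : nat) : R :=
  (1 - 1 / 2 ^+ s) * (2 ^+ d / 2 - 2 ^+ s * (#|Low s (d - s)|)%:R).

Lemma low_exists (R : realType) (s d : nat) : (0 < s)%N -> (2 * s <= d)%N ->
  exists m : nat, has_family R (d - s) d m /\
    (1 / 2 + 1 / 2 ^+ s.+1) * 2 ^+ d - fdef R s d <= (m%:R : R).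
Proof.
move=> s0 sd; have [n en] : exists n, d = (s + n)%N by exists (d - s)%N; lia.
subst d; have sn : (s <= n)%N by lia.
exists (#|PA s n| + #|PB s n|)%N; split; first exact: has_family_low.
have [h1 _] := Lc_bounds s0 sn.
have Ln : (#|Low s n| <= 2 ^ n)%N by lia.
rewrite /fdef addKn card_PA card_PB natrD natrM (natrB _ Ln) !natrX.
have hs : (2 : R) ^+ s != 0 by rewrite expf_neq0.
rewrite exprD exprS le_eqVlt; apply/orP; left; apply/eqP; field; exact: hs.
Qed.
Lemma fdef_bound (R : realType) (s n : nat) : (0 < s)%N -> (s <= n)%N ->
  0 <= fdef R s (s + n) / 2 ^+ (s + n) <= s%:R * ('C(n, n./2))%:R / 2 ^+ n.+1.
Proof.
move=> s0 sn; have [h1 h2] := Lc_bounds s0 sn.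
set L := #|Low s n| in h1 h2 *; set B := 'C(n, n./2) in h2 *.
have {}h1 : (2 * L%:R : R) <= 2 ^+ n by rewrite -natrX -(natrM R 2) ler_nat.
have {}h2 : (2 ^+ n : R) <= 2 * L%:R + s%:R * B%:R by rewrite -natrX -!natrM -natrD ler_nat.
rewrite /fdef addKn.
have P1 : (1 : R) <= 2 ^+ s by rewrite exprn_ege1 // ler1n.
have Q0 : (0 : R) < 2 ^+ n by rewrite exprn_gt0.
set P := (2 : R) ^+ s in P1 *; set Q := (2 : R) ^+ n in Q0 h1 h2 *.
have P0 : P != 0 by rewrite (gt_eqF (lt_le_trans ltr01 P1)).
have -> : (1 - 1 / P) * (2 ^+ (s + n) / 2 - P * L%:R) / 2 ^+ (s + n) =
   (1 - 1 / P) * ((Q - 2 * L%:R) / (2 * Q)).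
  rewrite exprD -/P -/Q; field; rewrite P0 /= gt_eqF //.
have -> : (s%:R * B%:R / 2 ^+ n.+1 : R) = (s%:R * B%:R) / (2 * Q) by rewrite exprS.
have Q2 : (0 : R) < 2 * Q by rewrite mulr_gt0.
have Pp : 0 < P := lt_le_trans ltr01 P1.
have a0 : 0 <= 1 - 1 / P by rewrite subr_ge0 ler_pdivrMr // mul1r.
have a1 : 1 - 1 / P <= 1 by rewrite lerBlDr lerDl divr_ge0 // ltW.
have u0 : 0 <= (Q - 2 * L%:R) / (2 * Q) by rewrite divr_ge0 ?subr_ge0 // ltW.
have u1 : (Q - 2 * L%:R) / (2 * Q) <= s%:R * B%:R / (2 * Q).
  by rewrite ler_pM2r ?invr_gt0 // lerBlDl.
apply/andP; split; first exact: mulr_ge0.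
apply: le_trans u1; rewrite -[X in _ <= X]mul1r; exact: ler_pM.
Qed.
Local Open Scope classical_set_scope.
Local Open Scope ring_scope.
Lemma key_ineq (R : realType) (S y e N1 : R) :
  0 <= S -> 0 <= y -> 0 < e -> 0 < N1 -> y ^+ 2 * N1 <= 4 -> S ^+ 2 < e ^+ 2 * N1 ->
  S * y < 2 * e.
Proof.
move=> S0 y0 e0 N0 H1 H2; rewrite ltNge; apply/negP => h.
have h3 : (2 * e) * (2 * e) <= (S * y) * (S * y).
  by apply: ler_pM => //; rewrite mulr_ge0 // ltW.
have h4 : (2 * e) * (2 * e) * N1 <= (S * y) * (S * y) * N1 by rewrite ler_wpM2r // ltW.
have h5 : S ^+ 2 * (y ^+ 2 * N1) <= S ^+ 2 * 4 by rewrite ler_wpM2l // sqr_ge0.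
have h6 : S ^+ 2 * 4 < e ^+ 2 * N1 * 4 by rewrite ltr_pM2r.
move: h4 h5 h6; rewrite !expr2; lra.
Qed.

Lemma fdef_lim (R : realType) (s : nat) : (0 < s)%N ->
  (fun d => fdef R s d / 2 ^+ d) @ \oo --> (0 : R).
Proof.
move=> s0; apply/cvgrPdist_lt => e e0.
have hK := archi_boundP (_ : 0 <= (s%:R : R) ^+ 2 / e ^+ 2); set K := Num.bound _ in hK.
have {}hK := hK (divr_ge0 (sqr_ge0 _) (sqr_ge0 _)).
exists (K + 2 * s)%N => // d /= hd.
have [n en] : exists n, d = (s + n)%N by exists (d - s)%N; lia.
subst d; have sn : (s <= n)%N by lia.
have nK : (K <= n)%N by lia.
have /andP[b0 b1] := fdef_bound R s0 sn.
rewrite sub0r normrN ger0_norm //; apply: le_lt_trans b1 _.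
have hb := bin_sq n n./2; set B := 'C(n, n./2) in hb *.
have e4 : (4 ^ n = (2 ^ n) ^ 2)%N by rewrite -expnM mulnC expnM.
rewrite e4 in hb.
have {}hb : ((B%:R / 2 ^+ n) ^+ 2 * n.+1%:R : R) <= 4.
  have Q0 : (0 : R) < 2 ^+ n by rewrite exprn_gt0.
  rewrite expr_div_n mulrAC ler_pdivrMr; last by rewrite exprn_gt0.
  by move: hb; rewrite -(ler_nat R) !natrM !natrX.
have hS : (s%:R : R) ^+ 2 < e ^+ 2 * n.+1%:R.
  rewrite -ltr_pdivrMl ?exprn_gt0 // mulrC; apply: lt_le_trans hK _.
  by rewrite ler_nat; lia.
have Q0 : (0 : R) < 2 ^+ n by rewrite exprn_gt0.
have := key_ineq (ler0n _ s) (divr_ge0 (ler0n _ B) (ltW Q0)) e0 (ltr0Sn _ n) hb hS.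
move=> h.
have -> : (s%:R * B%:R / 2 ^+ n.+1 : R) = (s%:R * (B%:R / 2 ^+ n)) / 2.
  by rewrite exprS; field; rewrite gt_eqF.
by rewrite ltr_pdivrMr // [e * 2]mulrC.
Qed.
Theorem theorem2 (R : realType) (s : nat) (hs : (0 < s)%N) :
  (* upper bound: every family of pairwise (d-s)-neighborly boxes is small *)
  (forall d : nat, (0 < d)%N -> (2 * s <= d)%N ->
     forall m : nat, has_family R (d - s) d m ->
       (m%:R : R) <= (1 / 2 + 1 / 2 ^+ s.+1) * 2 ^+ d) /\
  (* lower bound, with an o(2^d) error term (d -> oo, s fixed) *)
  (exists f : nat -> R,
     (fun d => f d / 2 ^+ d) @ \oo --> (0 : R) /\
     forall d : nat, (0 < d)%N -> (2 * s <= d)%N ->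
       exists m : nat, has_family R (d - s) d m /\
         (1 / 2 + 1 / 2 ^+ s.+1) * 2 ^+ d - f d <= (m%:R : R)) /\
  (* the limit *)
  (fun d => n_kd R (d - s) d / 2 ^+ d) @ \oo --> ((2 ^+ s + 1) / 2 ^+ s.+1 : R).
Proof.
split; first by move=> d d0 sd m; exact: upper_real.
split.
  exists (fdef R s); split; first exact: fdef_lim.
  by move=> d _ sd; exact: low_exists.
set c := (1 / 2 + 1 / 2 ^+ s.+1 : R).
have -> : ((2 ^+ s + 1) / 2 ^+ s.+1 : R) = c.
  by rewrite /c exprS; field; rewrite expf_neq0.
apply: (@squeeze_cvgr _ _ _ R (fun d => c - fdef R s d / 2 ^+ d) (fun _ => c)).
- exists (2 * s)%N => // d /= sd.
  have d0 : (0 < d)%N by lia.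
  have [m [hm hle]] := low_exists R hs sd.
  have D0 : (0 : R) < 2 ^+ d by rewrite exprn_gt0.
  set S := [set (m%:R : R) | m in [set m | has_family R (d - s) d m]].
  have ub : ubound S (c * 2 ^+ d).
    by move=> x [m' hm' <-]; exact: upper_real.
  have Sm : S m%:R by exists m.
  have h1 : (m%:R : R) <= n_kd R (d - s) d by apply: ub_le_sup => //; exists (c * 2 ^+ d).
  have h2 : n_kd R (d - s) d <= c * 2 ^+ d by apply: ge_sup => //; exists m%:R.
  apply/andP; split.
    have -> : c - fdef R s d / 2 ^+ d = (c * 2 ^+ d - fdef R s d) / 2 ^+ d.
      by field; rewrite gt_eqF.
    by rewrite ler_pM2r ?invr_gt0 //; apply: le_trans hle h1.
  by rewrite ler_pdivrMr.
- have := cvgB (cvg_cst c) (fdef_lim (R:=R) hs); rewrite subr0; exact.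
- exact: cvg_cst.
Qed.
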